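(* Let $S$ be a finite pseudo-nilpotent semigroup. If $I$ is an ideal of $S$ such that both $I$ and the Rees factor semigroup $S/I$ are nilpotent, then $S$ is nilpotent.
   Context: For a semigroup $S$, $S^1$ denotes $S$ with an identity adjoined (if $S$ has none). For $x,y\in S$ and $z_1,z_2,\ldots\in S^1$ define recursively $\lambda_0=x$, $\rho_0=y$, $\lambda_{n+1}=\lambda_n z_{n+1}\rho_n$, $\rho_{n+1}=\rho_n z_{n+1}\lambda_n$; write $\lambda_n(x,y,z_1,\ldots,z_n)$ and $\rho_n(x,y,z_1,\ldots,z_n)$. A semigroup $S$ is nilpotent (in the sense of Mal'cev) if there is a positive integer $n$ with $\lambda_n(a,b,c_1,\ldots,c_n)=\rho_n(a,b,c_1,\ldots,c_n)$ for all $a,b\in S$ and $c_1,\ldots,c_n\in S^1$. $\langle X\rangle$ denotes the subsemigroup generated by $X$. The upper non-nilpotent graph $\mathcal{N}_S$ has vertex set $S$, with an edge between $x$ and $y$ iff $\langle x,y\rangle$ is not nilpotent. The empty set is regarded as an ideal; for an ideal $I$ of $S$, $S/I$ is the Rees factor semigroup, with $S/\emptyset=S$. A semigroup $S$ is pseudo-nilpotent if the following holds: whenever $x,y\in S$, $w_1,\ldots,w_m\in S^1$, $T$ is the subsemigroup generated by $x,y$ and those $w_i$ lying in $S$, $I$ is an ideal (possibly empty) of $T$, and $t<m$ are non-negative integers such that, writing $\lambda_k=\lambda_k(x,y,w_1,\ldots,w_k)$ and $\rho_k=\rho_k(x,y,w_1,\ldots,w_k)$, one has $\lambda_t\neq\rho_t$,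 $(\lambda_t,\rho_t)=(\lambda_m,\rho_m)$ and $\lambda_m,\rho_m\notin I$, then for every $0\le i\le m$ there is an edge in $\mathcal{N}_{T/I}$ between (the images of) $\lambda_i$ and $\rho_i$. *)

(* Defs.v *)
From mathcomp Require Import all_boot.
Set Implicit Arguments. Unset Strict Implicit. Unset Printing Implicit Defensive.

(* A semigroup is a carrier type U with a binary operation op; a
   (sub)semigroup is given by a carrier predicate A : U -> Prop closed under op.
   S^1 is modelled by option U, None standing for the adjoined identity. *)

Section Semigroups.
Variables (U : Type) (op : U -> U -> U).

Definition mulz (a : U) (z : option U) (b : U) : U :=
  match z with Some c => op (op a c) b | None => op a b end.

(* (lambda_n, rho_n)(x, y, z_1, ..., z_n); z k is z_k (z 0 unused) *)
Fixpoint lamrho (x y : U) (z : nat -> option U) (n : nat) : U * U :=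
  match n with
  | 0 => (x, y)
  | k.+1 => let p := lamrho x y z k in
            (mulz p.1 (z k.+1) p.2, mulz p.2 (z k.+1) p.1)
  end.

Definition lam x y z n := (lamrho x y z n).1.
Definition rho x y z n := (lamrho x y z n).2.

Definition oin (A : U -> Prop) (u : option U) : Prop :=
  match u with Some c => A c | None => True end.

(* Mal'cev nilpotency of the semigroup (A, op) *)
Definition nilpotent (A : U -> Prop) : Prop :=
  exists n, 0 < n /\
    forall a b (z : nat -> option U), A a -> A b -> (forall k, oin A (z k)) ->
      lam a b z n = rho a b z n.

Inductive gen (X : U -> Prop) : U -> Prop :=
  | gen_base u : X u -> gen X u
  | gen_op u v : gen X u -> gen X v -> gen X (op u v).

(* I is a (possibly empty) ideal of the subsemigroup A *)
Definition is_ideal (A : U -> Prop) (I : U -> Prop) : Prop :=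
  (forall u, I u -> A u) /\
  (forall a u, A a -> I u -> I (op a u) /\ I (op u a)).

End Semigroups.

Section Rees.
Variables (T : finType) (op : T -> T -> T).

(* Rees factor A/I (I an ideal of A): elements are Some s with s in A \ I,
   plus the zero None if I is nonempty; if I is empty, A/I = A. *)
Definition rees_op (I : {set T}) (u v : option T) : option T :=
  match u, v with
  | Some x, Some y => if op x y \in I then None else Some (op x y)
  | _, _ => None
  end.

Definition rees_carrier (A : T -> Prop) (I : {set T}) (u : option T) : Prop :=
  match u with Some x => A x /\ x \notin I | None => I != set0 end.

Definition rees_img (I : {set T}) (s : T) : option T :=
  if s \in I then None else Some s.

Definition nn_edge (I : {set T}) (u v : option T) : Prop :=
  ~ nilpotent (rees_op I) (gen (rees_op I) (fun w => w = u \/ w = v)).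

(* pseudo-nilpotency of the semigroup (T, op); w k is w_k (k = 1..m) *)
Definition pseudo_nilpotent : Prop :=
  forall (x y : T) (w : nat -> option T) (m t : nat) (I : {set T}),
    let Tg := gen op (fun u => u = x \/ u = y \/
                        exists2 k, 0 < k <= m & w k = Some u) in
    is_ideal op Tg (fun u => u \in I) ->
    t < m ->
    lam op x y w t <> rho op x y w t ->
    lam op x y w t = lam op x y w m ->
    rho op x y w t = rho op x y w m ->
    lam op x y w m \notin I -> rho op x y w m \notin I ->
    forall i, i <= m ->
      nn_edge I (rees_img I (lam op x y w i)) (rees_img I (rho op x y w i)).

End Rees.

(* Main.v *)
From Stdlib Require Import Classical ClassicalEpsilon.
Require Import Defs.
From mathcomp Require Import all_boot.

Set Implicit Arguments. Unset Strict Implicit. Unset Printing Implicit Defensive.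

Definition pb (P : Prop) : bool := if excluded_middle_informative P then true else false.
Lemma pbP (P : Prop) : pb P <-> P.
Proof. by rewrite /pb; case: excluded_middle_informative. Qed.

Section H.
Variables (U : Type) (op : U -> U -> U).

Lemma lamrho_ext a b z z' n : (forall k, z k = z' k) ->
  lamrho op a b z n = lamrho op a b z' n.
Proof. move=> E; elim: n => [|n IH] //=; by rewrite IH E. Qed.

Lemma lam_S a b z k : lam op a b z k.+1 = mulz op (lam op a b z k) (z k.+1) (rho op a b z k).
Proof. by []. Qed.
Lemma rho_S a b z k : rho op a b z k.+1 = mulz op (rho op a b z k) (z k.+1) (lam op a b z k).
Proof. by []. Qed.

Lemma eq_up a b z k : lam op a b z k = rho op a b z k ->
  forall d, lam op a b z (k + d) = rho op a b z (k + d).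
Proof.
move=> E; elim=> [|d IH]; first by rewrite addn0.
by rewrite addnS lam_S rho_S IH.
Qed.

Lemma nil_agree (op2 : U -> U -> U) (A B : U -> Prop) :
  (forall u, A u -> B u) ->
  (forall u v, A u -> A v -> A (op u v) /\ op u v = op2 u v) ->
  nilpotent op2 B -> nilpotent op A.
Proof.
move=> AB H [n [n0 Hn]]; exists n; split=> // a b z Aa Ab Hz.
have Hm : forall k u v, A u -> A v ->
    mulz op u (z k) v = mulz op2 u (z k) v /\ A (mulz op u (z k) v).
  move=> k u v Au Av; move: (Hz k); case: (z k) => [c|] /= Hc.
    have [A1 E1] := H u c Au Hc; have [A2 E2] := H _ v A1 Av.
    by split=> //; rewrite E2 E1.
  by have [A1 E1] := H u v Au Av.
have key : forall k, lamrho op a b z k = lamrho op2 a b z k /\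
    A (lamrho op a b z k).1 /\ A (lamrho op a b z k).2.
  elim=> [|k [E [A1 A2]]] //=.
  have [E1 B1] := Hm k.+1 _ _ A1 A2; have [E2 B2] := Hm k.+1 _ _ A2 A1.
  by split; [rewrite -E E1 E2 | split].
have := Hn a b z (AB _ Aa) (AB _ Ab).
rewrite /lam /rho (proj1 (key n)); apply=> k; move: (Hz k).
by case: (z k) => //= c /AB.
Qed.

End H.

Section H2.
Variables (T : finType) (op : T -> T -> T).

Lemma lamrho_some (a b : T) z n :
  lamrho (rees_op op set0) (Some a) (Some b) (fun k => omap Some (z k)) n
  = (Some (lam op a b z n), Some (rho op a b z n)).
Proof.
elim: n => [|n IH] //.
rewrite lam_S rho_S /= IH /=.
by case: (z n.+1) => [c|]; rewrite /= /rees_op ?in_set0.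
Qed.

Lemma nil_some (P : T -> Prop) : nilpotent op P ->
  nilpotent (rees_op op set0) (fun u => exists2 v, u = Some v & P v).
Proof.
move=> [n [n0 H]]; exists n; split=> // _ _ z' [a -> Pa] [b -> Pb] Hz.
pose z := fun k => match z' k with Some (Some c) => Some c | _ => None end.
have E : forall k, z' k = omap Some (z k).
  move=> k; move: (Hz k); rewrite /z; case: (z' k) => [[c|]|] //= [v].
  by [].
rewrite /lam /rho (lamrho_ext _ _ _ _ E) lamrho_some /=.
rewrite (H a b z Pa Pb) // => k; move: (Hz k); rewrite /z.
by case: (z' k) => [[c|]|] //= [v [->]].
Qed.

End H2.

Lemma mulz_I (T : finType) (op : T -> T -> T) (I : {set T}) u c v :
  is_ideal op (fun _ => True) (fun u => u \in I) ->
  (u \in I) || (v \in I) -> mulz op u c v \in I.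
Proof.
move=> [_ Hid] /orP [Hu|Hv]; case: c => [c|] /=.
- exact: (proj2 (Hid v _  Logic.I (proj2 (Hid c u Logic.I Hu)))).
- exact: (proj2 (Hid v u Logic.I Hu)).
- exact: (proj1 (Hid (op u c) v Logic.I Hv)).
- exact: (proj1 (Hid u v Logic.I Hv)).
Qed.

Theorem lemma2p3 (T : finType) (op : T -> T -> T) (op_assoc : associative op)
  (I : {set T}) :
  pseudo_nilpotent op ->
  is_ideal op (fun _ => True) (fun u => u \in I) ->
  nilpotent op (fun u => u \in I) ->
  nilpotent (rees_op op I) (rees_carrier (fun _ => True) I) ->
  nilpotent op (fun _ => True).
Proof.
move=> pn Iid Inil Rnil; apply: NNPP => Hnn.
pose N := #|{: T * T}|.
have [a [b [z Hne]]] : exists a b z, lam op a b z N.+1 <> rho op a b z N.+1.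
  apply: NNPP => Hno; apply: Hnn; exists N.+1; split=> // a b z _ _ _.
  by apply: NNPP => Hne; apply: Hno; exists a, b, z.
have neq : forall k, k <= N.+1 -> lam op a b z k <> rho op a b z k.
  move=> k Hk E; apply: Hne; have := eq_up E (N.+1 - k).
  by rewrite subnKC.
pose f := fun i : 'I_N.+2 => lamrho op a b z i.
have [t [m [Htm [HmN Ecyc]]]] : exists t m, t < m /\ m <= N.+1 /\
    lamrho op a b z t = lamrho op a b z m.
  apply: NNPP => Hno.
  have finj : injective f.
    move=> i j Eij; apply: val_inj; apply: NNPP => Hij.
    move/eqP: Hij; rewrite neq_ltn => /orP [H|H]; apply: Hno.
      by exists i, j; split=> //; split=> //; rewrite -ltnS.
    by exists j, i; split=> //; split=> //; rewrite -ltnS.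
  have := leq_card f finj; rewrite card_ord => H.
  by have := ltn_trans (ltnSn _) H; rewrite ltnn.
have El : lam op a b z t = lam op a b z m by rewrite /lam Ecyc.
have Er : rho op a b z t = rho op a b z m by rewrite /rho Ecyc.
have Hnt := neq t (leq_trans (ltnW Htm) HmN).
case: (boolP ((lam op a b z m \in I) || (rho op a b z m \in I))) => HI.
- have Hid0 : forall Tg : T -> Prop, is_ideal op Tg (fun u => u \in (set0 : {set T})).
    by move=> Tg; split=> [u|a' u _]; rewrite in_set0.
  have := pn a b z m t set0 (Hid0 _) Htm Hnt El Er ltac:(by rewrite in_set0) ltac:(by rewrite in_set0) t.+1 Htm.
  rewrite /nn_edge /rees_img !in_set0; apply.
  have Hl : lam op a b z t.+1 \in I by rewrite lam_S mulz_I // El Er.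
  have Hr : rho op a b z t.+1 \in I by rewrite rho_S mulz_I // El Er orbC.
  apply: (nil_agree (op2 := rees_op op set0)
     (B := fun u => exists2 v, u = Some v & v \in I)) _ _ (nil_some Inil).
    move=> u; elim=> [w [->|->]|u1 u2 _ [v1 -> H1] _ [v2 -> H2]].
    + by exists (lam op a b z t.+1).
    + by exists (rho op a b z t.+1).
    + exists (op v1 v2); first by rewrite /= in_set0.
      exact: (proj1 (Iid.2 v1 v2 Logic.I H2)).
  by move=> u v Au Av; split=> //; apply: gen_op.
- pose Tg := gen op (fun u => u = a \/ u = b \/
                        exists2 k, 0 < k <= m & z k = Some u).
  pose I' := [set u | (u \in I) && pb (Tg u)].
  have inI' : forall u, Tg u -> (u \in I') = (u \in I).
    by move=> u Hu; rewrite inE (proj2 (pbP _) Hu) andbT.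
  have Hid' : is_ideal op Tg (fun u => u \in I').
    split=> [u|a' u Ha]; rewrite inE => /andP [Hu /pbP Tu].
      exact.
    rewrite !inE; have [H1 H2] := Iid.2  a' u Logic.I Hu.
    rewrite H1 H2 /=; split; apply/pbP; apply: gen_op => //.
  move: HI; rewrite negb_or => /andP [Hl Hr].
  have Hl' : lam op a b z m \notin I' by rewrite inE (negbTE Hl).
  have Hr' : rho op a b z m \notin I' by rewrite inE (negbTE Hr).
  have := pn a b z m t I' Hid' Htm Hnt El Er Hl' Hr' 0 (leq0n _).
  rewrite /nn_edge; apply.
  pose Q := fun u : option T => match u with
    | None => I != set0 | Some v => Tg v /\ v \notin I end.
  have QI : forall u, Tg u -> Q (rees_img I' u).
    move=> u Tu; rewrite /rees_img; case: ifP => Hu /=.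
      by apply/set0Pn; exists u; move: Hu; rewrite inE => /andP [].
    by split=> //; rewrite -inI' // Hu.
  have AQ : forall u, gen (rees_op op I') (fun w => w = rees_img I' (lam op a b z 0)
                \/ w = rees_img I' (rho op a b z 0)) u -> Q u.
    move=> u; elim=> [w [->|->]|u1 u2 _ Q1 _ Q2].
    + by apply: QI; apply: gen_base; left.
    + by apply: QI; apply: gen_base; right; left.
    + case: u1 Q1 => [x|] Q1; case: u2 Q2 => [y|] Q2 //=.
      case: Q1 => T1 _; case: Q2 => T2 _.
      have Txy : Tg (op x y) by apply: gen_op.
      case: ifP => H /=.
        by apply/set0Pn; exists (op x y); move: H; rewrite inE => /andP [].
      by split=> //; rewrite -inI' // H.
  apply: (nil_agree (op2 := rees_op op I)) _ _ Rnil.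
    by move=> u /AQ; case: u => [x [_ H]|].
  move=> u v Au Av; split; first exact: gen_op.
  move: (AQ _ Au) (AQ _ Av); case: u {Au} => [x|]; case: v {Av} => [y|] //=.
  by move=> [T1 _] [T2 _]; rewrite inI' //; apply: gen_op.
Qed.
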